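(* Let $\mathbb P$ be an LTF. Then $\mathbb P\times_{E_0}\mathbb P$ forces that $x_{\mathrm{left}}$ and $x_{\mathrm{right}}$ are not $E_0$-equivalent, where $\langle x_{\mathrm{left}},x_{\mathrm{right}}\rangle$ is the generic pair of reals, i.e. the unique pair with $\langle x_{\mathrm{left}},x_{\mathrm{right}}\rangle\in[T]\times[T']$ for all $\langle T,T'\rangle$ in the generic filter.
   Context: Notation. $2^{<\omega}$ is the set of finite binary strings, $\mathrm{lh}(s)$ the length of $s$, $s\subseteq t$ means $t$ extends $s$. For $s\in 2^{<\omega}$ and $x\in 2^\omega$, $s\cdot x\in 2^\omega$ is given by $(s\cdot x)(k)=x(k)+s(k)\bmod 2$ for $k<\mathrm{lh}(s)$ and $(s\cdot x)(k)=x(k)$ otherwise. For strings $s,t$ with $\mathrm{lh}(s)\le\mathrm{lh}(t)$, $s\cdot t$ is the string of length $\mathrm{lh}(t)$ with $(s\cdot t)(k)=t(k)+s(k)\bmod 2$ for $k<\mathrm{lh}(s)$ and $(s\cdot t)(k)=t(k)$ otherwise; if $\mathrm{lh}(s)>\mathrm{lh}(t)$ then $s\cdot t=(s\restriction\mathrm{lh}(t))\cdot t$. For $T\subseteq 2^{<\omega}$, $s\cdot T=\{s\cdot t:t\in T\}$. For a tree $T$ and $s\in T$, $T\upharpoonright s=\{t\in T:s\subseteq t\lor t\subseteq s\}$. A perfect tree is a nonempty tree $T\subseteq 2^{<\omega}$ with no endpoints and no isolated branches; its stem $\mathrm{stem}(T)$ is the largest $s\in T$ with $T=T\upharpoonright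 s$; $[T]=\{a\in 2^\omega:\forall m\,(a\restriction m\in T)\}$. A perfect tree $T$ is large, written $T\in\mathbf{LT}$, if there are nonempty strings $q^i_n$ ($n<\omega$, $i=0,1$) with $\mathrm{lh}(q^0_n)=\mathrm{lh}(q^1_n)\ge1$ and $q^i_n(0)=i$, such that $T$ consists exactly of all initial segments of strings $r^\frown q^{i(0)}_0{}^\frown\cdots{}^\frown q^{i(n)}_n$, where $r=\mathrm{stem}(T)$, $n<\omega$, $i(0),\dots,i(n)\in\{0,1\}$. A large-tree forcing notion (LTF) is a set $\mathbb P\subseteq\mathbf{LT}$ such that $T\upharpoonright u\in\mathbb P$ whenever $u\in T\in\mathbb P$, and $s\cdot T\in\mathbb P$ whenever $T\in\mathbb P$ and $s\in 2^{<\omega}$. The conditional product $\mathbb P\times_{E_0}\mathbb P$ is the set of pairs $\langle T,T'\rangle$ of trees $T,T'\in\mathbb P$ such that $T'=s\cdot T$ for some $s\in 2^{<\omega}$, ordered componentwise by inclusion (smaller is stronger). $E_0$ is the equivalence relation on $2^\omega$: $x\,E_0\,y$ iff $x(n)=y(n)$ for all but finitely many $n$, equivalently $y=\sigma\cdot x$ for some $\sigma\in 2^{<\omega}$. *)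

(* Defs.v *)
From mathcomp Require Import all_boot.
Set Implicit Arguments. Unset Strict Implicit. Unset Printing Implicit Defensive.

Definition str := seq bool.
Definition real := nat -> bool.
Definition tree_t := str -> Prop.

Definition sub_str (s t : str) : Prop := prefix s t.

Definition sdot_real (s : str) (x : real) : real :=
  fun k => xorb (nth false s k) (x k).

(* s · t for strings: length lh(t); flips t(k) for k < min(lh s, lh t) *)
Definition sdot_str (s t : str) : str :=
  mkseq (fun k => xorb (nth false s k) (nth false t k)) (size t).

Definition sdot_tree (s : str) (T : tree_t) : tree_t :=
  fun u => exists t, T t /\ u = sdot_str s t.

Definition restrict (T : tree_t) (s : str) : tree_t :=
  fun t => T t /\ (sub_str s t \/ sub_str t s).

Definition is_tree (T : tree_t) : Prop :=
  (exists t, T t) /\ forall s t, T t -> sub_str s t -> T s.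

Definition perfect_tree (T : tree_t) : Prop :=
  is_tree T /\
  (forall t, T t -> exists u, T u /\ sub_str t u /\ size t < size u) /\
  (forall t, T t -> exists u v, T u /\ T v /\ sub_str t u /\ sub_str t v /\
                     ~ sub_str u v /\ ~ sub_str v u).

Definition same_tree (T T' : tree_t) : Prop := forall t, T t <-> T' t.

Definition is_stem (T : tree_t) (r : str) : Prop :=
  T r /\ same_tree T (restrict T r) /\
  forall s, T s -> same_tree T (restrict T s) -> sub_str s r.

Definition body (T : tree_t) : real -> Prop :=
  fun a => forall m, T (mkseq a m).

Definition large_tree (T : tree_t) : Prop :=
  perfect_tree T /\
  exists (r : str) (q : nat -> bool -> str),
    is_stem T r /\
    (forall n, size (q n false) = size (q n true) /\ 1 <= size (q n false)) /\
    (forall n (i : bool), nth false (q n i) 0 = i) /\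
    (forall t, T t <-> exists (n : nat) (i : nat -> bool),
        sub_str t (r ++ flatten [seq q k (i k) | k <- iota 0 n.+1])).

Definition LTF (P : tree_t -> Prop) : Prop :=
  (forall T, P T -> large_tree T) /\
  (forall T u, P T -> T u -> P (restrict T u)) /\
  (forall T s, P T -> P (sdot_tree s T)).

Definition cond_prod (P : tree_t -> Prop) (T T' : tree_t) : Prop :=
  P T /\ P T' /\ exists s, T' = sdot_tree s T.

Definition subtree (S T : tree_t) : Prop := forall t, S t -> T t.

Definition E0 (x y : real) : Prop := exists sigma : str, forall k, y k = sdot_real sigma x k.

(* Main.v *)
Require Import Defs.
From mathcomp Require Import all_boot.

Definition xs (s d : str) : str :=
  mkseq (fun k => xorb (nth false s k) (nth false d k)) (maxn (size s) (size d)).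

Lemma size_sdot d v : size (sdot_str d v) = size v.
Proof. by rewrite /sdot_str size_mkseq. Qed.

Lemma nth_sdot d v k : nth false (sdot_str d v) k =
  if k < size v then xorb (nth false d k) (nth false v k) else false.
Proof.
rewrite /sdot_str; case: ltnP => h; first by rewrite nth_mkseq.
by rewrite nth_default // size_mkseq.
Qed.

Lemma nth_xs s d k : nth false (xs s d) k = xorb (nth false s k) (nth false d k).
Proof.
rewrite /xs; case: (ltnP k (maxn (size s) (size d))) => h; first by rewrite nth_mkseq.
rewrite geq_max in h; case/andP: h => h1 h2.
by rewrite nth_default ?size_mkseq ?geq_max ?h1 ?h2 // !nth_default.
Qed.

Lemma sdot_xs s d v : sdot_str (xs s d) v = sdot_str s (sdot_str d v).
Proof.
apply: (@eq_from_nth _ false); rewrite ?size_sdot // => k hk.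
rewrite !nth_sdot size_sdot hk nth_xs.
by case: (nth false s k); case: (nth false d k); case: (nth false v k).
Qed.

Lemma sdot_cat d a b :
  sdot_str d (a ++ b) = sdot_str d a ++ sdot_str (drop (size a) d) b.
Proof.
apply: (@eq_from_nth _ false); rewrite ?size_sdot ?size_cat ?size_sdot // => k hk.
rewrite ?size_cat in hk.
rewrite nth_sdot size_cat hk !nth_cat size_sdot.
case: (ltnP k (size a)) => hka; first by rewrite nth_sdot hka.
by rewrite nth_sdot nth_drop subnKC // ltn_subLR // hk.
Qed.

Lemma sdot_nil v : sdot_str [::] v = v.
Proof.
apply: (@eq_from_nth _ false); rewrite ?size_sdot // => k hk.
by rewrite nth_sdot hk nth_nil.
Qed.

Lemma cmp_eq (a b : str) : (prefix a b \/ prefix b a) -> size a = size b -> a = b.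
Proof.
case=> /prefixP [c ->]; rewrite size_cat => h.
  have : size c = 0 by apply/eqP; rewrite -(eqn_add2l (size a)) addn0 -h.
  by case: c {h} => // _; rewrite cats0.
have : size c = 0 by apply/eqP; rewrite -(eqn_add2l (size b)) addn0 h.
by case: c {h} => // _; rewrite cats0.
Qed.

Definition Dflip (r : str) (q : nat -> bool -> str) : str :=
  nseq (size r) false ++
  mkseq (fun k => xorb (nth false (q 0 false) k) (nth false (q 0 true) k)) (size (q 0 false)).

Lemma flipT (T : tree_t) (r : str) (q : nat -> bool -> str) :
  (forall n, size (q n false) = size (q n true) /\ 1 <= size (q n false)) ->
  (forall t, T t <-> exists (n : nat) (i : nat -> bool),
        sub_str t (r ++ flatten [seq q k (i k) | k <- iota 0 n.+1])) ->
  forall v, T v -> T (sdot_str (Dflip r q) v).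
Proof.
move=> Hsz HT v /HT [n [i hp]].
apply/HT; exists n, (fun k => if k == 0 then ~~ i 0 else i k).
move: hp; rewrite /sub_str => /prefixP [c hc].
have E : [seq q k (if k == 0 then ~~ i 0 else i k) | k <- iota 1 n] =
         [seq q k (i k) | k <- iota 1 n].
  apply/eq_in_map => k; rewrite mem_iota => /andP [h1 _].
  by case: eqP h1 => // ->.
move: hc; rewrite /= E => hc.
set R := flatten _ in hc *.
have -> : r ++ q 0 (~~ i 0) ++ R = sdot_str (Dflip r q) (r ++ q 0 (i 0) ++ R).
  rewrite sdot_cat /Dflip drop_size_cat ?size_nseq // sdot_cat.
  rewrite [drop _ (mkseq _ _)]drop_oversize; last first.
    by rewrite size_mkseq; case: (i 0) => //; case: (Hsz 0) => ->.
  have -> : sdot_str [::] R = R by exact: sdot_nil.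
  congr (_ ++ (_ ++ _)).
    apply: (@eq_from_nth _ false); rewrite ?size_sdot // => k hk.
    by rewrite nth_sdot hk nth_cat size_nseq hk nth_nseq hk.
  have [s1 _] := Hsz 0.
  apply: (@eq_from_nth _ false); rewrite ?size_sdot.
    by case: (i 0) => //=.
  move=> k hk; rewrite nth_sdot.
  have hk' : k < size (q 0 (i 0)) by case: (i 0) hk => //=; rewrite s1.
  rewrite hk' nth_mkseq; last by case: (i 0) hk' => //=; rewrite s1.
  by case: (i 0); case: (nth false (q 0 false) k); case: (nth false (q 0 true) k).
rewrite hc sdot_cat; exact: prefix_prefix.
Qed.

Theorem corollary5p4 (P : tree_t -> Prop) (HP : LTF P) :
  forall (T T' : tree_t), cond_prod P T T' ->
  forall sigma : str,
  exists (S S' : tree_t),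
    cond_prod P S S' /\ subtree S T /\ subtree S' T' /\
    forall x y : real, body S x -> body S' y -> ~ (forall k, y k = sdot_real sigma x k).
Proof.
move=> T T' [PT [PT' [s ->]]] sigma.
have [HL [Hres Hdot]] := HP.
have [_ [r [q [_ [Hsz [Hq0 HT]]]]]] := HL T PT.
pose u := r ++ q 0 false.
have Tu : T u.
  apply/HT; exists 0, (fun _ => false); rewrite /= cats0; exact: prefix_refl.
pose d := if nth false s (size r) != nth false sigma (size r) then [::] else Dflip r q.
have Hd : forall v, T v -> T (sdot_str d v).
  rewrite /d; case: ifP => _ v Tv; first by rewrite sdot_nil.
  exact (@flipT T r q Hsz HT v Tv).
have [s1 s2] := Hsz 0.
have Hdr : nth false (xs s d) (size r) != nth false sigma (size r).
  rewrite nth_xs /d; case: ifP => h.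
    by rewrite nth_nil; move: h; case: (nth false s _); case: (nth false sigma _).
  rewrite /Dflip nth_cat size_nseq ltnn subnn nth_mkseq // Hq0 Hq0.
  by move: h; case: (nth false s _); case: (nth false sigma _).
exists (restrict T u), (sdot_tree (xs s d) (restrict T u)).
split; first by split; [apply: Hres | split; [apply: Hdot; apply: Hres | exists (xs s d)]].
split; first by move=> t [].
split.
  move=> w [v [[Tv _] ->]]; exists (sdot_str d v); split; first exact: Hd.
  exact: sdot_xs.
move=> x y Hx Hy Hxy.
pose m := size u.
have Hr : size r < m by rewrite /m /u size_cat -addn1 leq_add2l.
have [Tx cx] := Hx m.
have ex : mkseq x m = u by apply: cmp_eq; [ case: cx; auto | rewrite size_mkseq].
have [t' [[Tt ct] ey]] := Hy m.
have et : t' = u.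
  apply: cmp_eq; first by case: ct; auto.
  by rewrite -(size_sdot (xs s d)) -ey size_mkseq.
have := congr1 (fun l => nth false l (size r)) ey.
rewrite /= nth_mkseq // nth_sdot et -/m Hr Hxy /sdot_real -ex nth_mkseq //.
by move: Hdr; case: (nth false (xs s d) _); case: (nth false sigma _); case: (x _).
Qed.
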